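(* Assume that $f\in\mathcal D(\alpha,\beta)$ and $g\in\mathcal D(a,b)$ for some $\alpha,a\ge 0$ and $\beta,b\in\mathbb R$. Let $h:\mathbb R\to\mathbb R$ be defined by $h(k)=(a-\alpha)k-(b-\beta)$. If $g\ge f$, then $\alpha\le a$, and if moreover $\alpha=a$ then $\beta\ge b$. If $g\ge f$ and $g-f\ge h$, then $(g-f)^c\in\mathcal D(a-\alpha,b-\beta)$.
   Context: For $\alpha\ge0$ and $\beta\in\mathbb R$, $\mathcal D(\alpha,\beta)$ denotes the set of increasing convex functions $f:\mathbb R\to\mathbb R_+$ such that $\lim_{z\to-\infty}f(z)=0$ and $\lim_{z\to\infty}\{f(z)-(\alpha z-\beta)\}=0$. For a function $u:\mathbb R\to\mathbb R$, $u^c$ denotes the largest convex function lying below $u$ (the convex hull). *)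

(* Defs.v *)
From mathcomp Require Import all_boot all_order all_algebra.
From mathcomp Require Import all_classical all_reals all_analysis.
Set Implicit Arguments. Unset Strict Implicit. Unset Printing Implicit Defensive.
Import Order.TTheory GRing.Theory Num.Theory.
Import numFieldNormedType.Exports.
Local Open Scope classical_set_scope.
Local Open Scope ring_scope.

Definition convex_fun (R : realType) (w : R -> R) : Prop :=
  forall (x y t : R), 0 <= t -> t <= 1 ->
    w (t * x + (1 - t) * y) <= t * w x + (1 - t) * w y.

Definition inD (R : realType) (alpha beta : R) (f : R -> R) : Prop :=
  0 <= alpha /\
  (forall x y, x <= y -> f x <= f y) /\
  convex_fun f /\
  (forall z, 0 <= f z) /\
  (f x @[x --> -oo] --> 0) /\
  ((f x - (alpha * x - beta)) @[x --> +oo] --> 0).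

Definition conv_hull (R : realType) (u : R -> R) : R -> R :=
  fun x => sup [set w x | w in [set w : R -> R | convex_fun w /\ (forall y, w y <= u y)]].

(* Main.v *)
Require Import Defs.
From mathcomp Require Import all_boot all_order all_algebra.
From mathcomp Require Import all_classical all_reals all_analysis.
From mathcomp Require Import ring lra.
Import Order.TTheory GRing.Theory Num.Theory.
Import numFieldNormedType.Exports.
Local Open Scope classical_set_scope.
Local Open Scope ring_scope.

Lemma pinf_ex (R : realType) (P : R -> Prop) : (\forall x \near +oo, P x) ->
  exists M : R, forall x, M < x -> P x.
Proof. case=> M [Mr HM]; by exists M. Qed.
Lemma ninf_ex (R : realType) (P : R -> Prop) : (\forall x \near -oo, P x) ->
  exists M : R, forall x, x < M -> P x.
Proof. case=> M [Mr HM]; by exists M. Qed.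

Section Hull.
Variables (R : realType) (u : R -> R).
Hypothesis u0 : forall y, 0 <= u y.
Let W := [set w : R -> R | convex_fun w /\ (forall y, w y <= u y)].

Lemma hull_ne x : [set w x | w in W] !=set0.
Proof.
exists ((fun _ : R => 0 : R) x); exists (fun _ => 0) => //; split => //.
by move=> ? ? t _ _; lra.
Qed.

Lemma hull_ubd x : ubound [set w x | w in W] (u x).
Proof. by move=> _ [w [_ wu] <-]. Qed.

Lemma hull_ub x : conv_hull u x <= u x.
Proof. exact: ge_sup (hull_ne x) (hull_ubd x). Qed.

Lemma hull_lb w x : convex_fun w -> (forall y, w y <= u y) -> w x <= conv_hull u x.
Proof.
move=> cw wu; apply: (ub_le_sup (E := [set w x | w in W])).
  by exists (u x); exact: hull_ubd.
by exists w.
Qed.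

Lemma hull_convex : convex_fun (conv_hull u).
Proof.
move=> x y t t0 t1; apply: ge_sup; first exact: hull_ne.
move=> _ [w [cw wu] <-].
apply: (le_trans (cw x y t t0 t1)).
apply: lerD; apply: ler_wpM2l; try lra; exact: hull_lb.
Qed.
End Hull.

Lemma convex_mono (R : realType) (c : R -> R) : convex_fun c -> (forall z, 0 <= c z) ->
  (c x @[x --> -oo] --> 0) -> forall x y, x <= y -> c x <= c y.
Proof.
move=> cc c0 lim x y xy; rewrite leNgt; apply/negP => cyx.
have xy' : x < y.
  rewrite lt_neqAle xy andbT; apply/negP => /eqP E; move: cyx; rewrite E; lra.
have key : forall z, z < x -> c x <= c z.
  move=> z zx; rewrite leNgt; apply/negP => czx.
  have yz : 0 < y - z by lra.
  set t := (y - x) / (y - z).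
  have t0 : 0 < t by apply: divr_gt0; lra.
  have t1 : t < 1 by rewrite /t ltr_pdivrMr //; lra.
  have E : t * z + (1 - t) * y = x.
    rewrite /t; field; lra.
  have := cc z y t (ltW t0) (ltW t1); rewrite E => H.
  have H1 : t * c z < t * c x by rewrite ltr_pM2l.
  have H2 : (1 - t) * c y <= (1 - t) * c x by rewrite ler_wpM2l //; lra.
  lra.
have cxpos : 0 < c x by have := c0 y; lra.
move/cvgrPdist_lt: lim => /(_ _ cxpos) /ninf_ex [M HM].
have h1 : Num.min M x <= M by rewrite ge_min lexx.
have h2 : Num.min M x <= x by rewrite ge_min lexx orbT.
have := HM (Num.min M x - 1) ltac:(lra).
have := key (Num.min M x - 1) ltac:(lra).
rewrite sub0r normrN ger0_norm //; lra.
Qed.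

Set Implicit Arguments. Unset Strict Implicit.
Lemma near_bnd (R : realType) (k : R -> R) (e : R) : 0 < e ->
  (k x @[x --> +oo] --> 0) -> exists M : R, forall x, M < x -> - e < k x < e.
Proof.
move=> e0 /cvgrPdist_lt /(_ _ e0) /pinf_ex [M HM]; exists M => x /HM.
by rewrite sub0r normrN ltr_norml.
Qed.

Lemma part1 (R : realType) (f g : R -> R) (alpha beta a b : R) :
  inD alpha beta f -> inD a b g -> (forall x, f x <= g x) ->
  alpha <= a /\ (alpha = a -> b <= beta).
Proof.
move=> [_ [_ [_ [_ [_ Lf]]]]] [_ [_ [_ [_ [_ Lg]]]]] fg.
have [M1 H1] := near_bnd (@ltr01 R) Lf.
have [M2 H2] := near_bnd (@ltr01 R) Lg.
split.
  rewrite leNgt; apply/negP => aa.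
  set K := (2 - (b - beta)) / (alpha - a).
  set x := Num.max (Num.max M1 M2) K + 1.
  have m1 : M1 <= Num.max (Num.max M1 M2) K by rewrite !le_max lexx.
  have m2 : M2 <= Num.max (Num.max M1 M2) K by rewrite !le_max lexx orbT.
  have m3 : K <= Num.max (Num.max M1 M2) K by rewrite !le_max lexx orbT.
  have /andP[f1 f2] := H1 x ltac:(rewrite /x; lra).
  have /andP[g1 g2] := H2 x ltac:(rewrite /x; lra).
  have Kx : K < x by rewrite /x; lra.
  have : (alpha - a) * K < (alpha - a) * x by rewrite ltr_pM2l // subr_gt0.
  have -> : (alpha - a) * K = 2 - (b - beta).
    rewrite /K mulrC divfK //; apply/eqP => E; move: aa; lra.
  have := fg x. nra.
move=> E; subst alpha; rewrite leNgt; apply/negP => bb.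
have e0 : 0 < (b - beta) / 3 by apply: divr_gt0; lra.
have [N1 G1] := near_bnd e0 Lf.
have [N2 G2] := near_bnd e0 Lg.
set x := Num.max N1 N2 + 1.
have m1 : N1 <= Num.max N1 N2 by rewrite le_max lexx.
have m2 : N2 <= Num.max N1 N2 by rewrite le_max lexx orbT.
have /andP[f1 f2] := G1 x ltac:(rewrite /x; lra).
have /andP[g1 g2] := G2 x ltac:(rewrite /x; lra).
have := fg x. lra.
Qed.

Theorem lemma2p4 (R : realType) (f g : R -> R) (alpha beta a b : R) :
  0 <= alpha -> 0 <= a -> inD alpha beta f -> inD a b g ->
  ((forall x, f x <= g x) -> alpha <= a /\ (alpha = a -> b <= beta)) /\
  ((forall x, f x <= g x) ->
   (forall k, (a - alpha) * k - (b - beta) <= g k - f k) ->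
   inD (a - alpha) (b - beta) (conv_hull (fun x => g x - f x))).
Proof.
move=> al0 a0 Df Dg; split; first exact: part1.
move=> fg hk; have [aa _] := part1 Df Dg fg.
move: (Df) (Dg) => [_ [_ [_ [f0 [Lfm Lf]]]]] [_ [_ [_ [g0 [Lgm Lg]]]]].
set u := fun x => g x - f x.
have u0 : forall y, 0 <= u y by move=> y; rewrite /u; have := fg y; lra.
have c0 : forall z, 0 <= conv_hull u z.
  move=> z; apply: (@hull_lb R u (fun _ => 0)) => //.
  by move=> ? ? t _ _; lra.
have cc := @hull_convex R u u0.
have cub := @hull_ub R u u0.
have Lm : conv_hull u x @[x --> -oo] --> 0.
  apply: (squeeze_cvgr (f := fun=> 0) (h := g)).
  - apply: nearW => x; rewrite c0 /=; have := cub x; have := f0 x; rewrite /u; lra.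
  - exact: cvg_cst.
  - exact: Lgm.
split; first lra.
split; first exact: convex_mono.
split; first exact: cc.
split; first exact: c0.
split; first exact: Lm.
have hl : forall x, (a - alpha) * x - (b - beta) <= conv_hull u x.
  move=> x; apply: (@hull_lb R u (fun k => (a - alpha) * k - (b - beta))) => //.
  move=> x1 y1 t _ _; lra.
apply: (squeeze_cvgr (f := fun=> 0)
   (h := fun x => (g x - (a * x - b)) - (f x - (alpha * x - beta)))).
- apply: nearW => x /=; have := hl x; have := cub x; rewrite /u => H1 H2; apply/andP; split; lra.
- exact: cvg_cst.
- have := cvgB Lg Lf; rewrite subr0 => H. apply: H.
Qed.
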